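(* Let $n\ge3$. Let $(\mu,\Sigma)$ satisfy the normalization below, with $\operatorname{Tr}(\Sigma)=n$, and the observability assumption with parameter $\gamma\in(0,1)$. Then for every $i\in[n]$, $$\Sigma_{ii}\le\frac{100\log(8/\gamma)}{\gamma^2}.$$
   Context: Probit model: utilities $X\sim\mathcal{N}(\mu,\Sigma)$ with $\mu\in\mathbb{R}^n$ and $\Sigma$ symmetric positive semidefinite. Normalization: $\langle\mu,\mathbf 1\rangle=0$, $\Sigma\mathbf1=0$, $\operatorname{Tr}(\Sigma)=n$, and $\operatorname{rank}(\Sigma)=n-1$. Observability assumption: for all pairwise distinct $i,j,k\in[n]$, $\Pr\{X_i>X_j>X_k\}\ge\gamma$. $\log$ is the natural logarithm. *)

(* Defs.v *)
From HB Require Import structures.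
From mathcomp Require Import all_boot all_order all_algebra.
From mathcomp Require Import all_classical all_reals all_analysis.
Set Implicit Arguments. Unset Strict Implicit. Unset Printing Implicit Defensive.
Import Order.TTheory GRing.Theory Num.Theory.
Local Open Scope classical_set_scope.
Local Open Scope ring_scope.

(* For v = 0 it is the Dirac mass at m (the library's
   normal_prob uses a junk value for standard deviation 0, so we treat the
   degenerate case explicitly). *)
Definition gauss_law {R : realType} (m v : R) (B : set R) : \bar R :=
  if v == 0 then (\1_B m)%:E else normal_prob m (Num.sqrt v) B.

(* X = (X_0,...,X_{n-1}) is a Gaussian vector N(mu, Sigma): every linear
   combination <t, X> has law N(<t, mu>, t^T Sigma t) (standard definition,
   which covers degenerate covariance). *)
Definition is_gaussian_vector {R : realType} (d : measure_display)
  (T : measurableType d) (P : probability T R) (n : nat)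
  (X : 'I_n -> {RV P >-> R}) (mu : 'I_n -> R) (Sigma : 'M[R]_n) : Prop :=
  forall (t : 'I_n -> R) (B : set R), measurable B ->
    P [set w | B (\sum_(i < n) t i * X i w)] =
    gauss_law (\sum_(i < n) t i * mu i)
              (\sum_(i < n) \sum_(j < n) t i * Sigma i j * t j) B.

(* Main.v *)
Require Import Defs.
From HB Require Import structures.
From mathcomp Require Import all_boot all_order all_algebra.
From mathcomp Require Import all_classical all_reals all_analysis.
From mathcomp Require Import measurable_realfun.
From mathcomp Require Import lra ring zify.
Import Order.TTheory GRing.Theory Num.Theory.
Local Open Scope classical_set_scope.
Local Open Scope ring_scope.

Set Implicit Arguments.
Section H.
Variable R : realType.

Lemma exists_min (n : nat) (P : pred 'I_n) (F : 'I_n -> R) (i0 : 'I_n) :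
  P i0 -> exists j, P j /\ forall l, P l -> F j <= F l.
Proof.
move=> Pi0; case: (@arg_minP _ _ _ i0 P F Pi0) => j Pj H; exists j; split => //.
Qed.

Definition ev (n : nat) (i : 'I_n) : 'I_n -> R := fun l => (l == i)%:R.

Lemma sum_ev n (i : 'I_n) (F : 'I_n -> R) : \sum_(l < n) ev i l * F l = F i.
Proof.
rewrite (bigD1 i) //= big1 ?addr0 /ev ?eqxx ?mul1r // => l /negbTE ->.
by rewrite mul0r.
Qed.

Lemma sum_lin n (i j : 'I_n) (b c : R) (F : 'I_n -> R) :
  \sum_(l < n) (b * ev j l + c * ev i l) * F l = b * F j + c * F i.
Proof.
rewrite -(sum_ev j F) -(sum_ev i F) !mulr_sumr -big_split /=.
by apply: eq_bigr => l _; rewrite mulrDl !mulrA.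
Qed.

Lemma quad_lin n (i j : 'I_n) (b c : R) (S : 'M[R]_n) :
  \sum_(l < n) \sum_(m < n) (b * ev j l + c * ev i l) * S l m * (b * ev j m + c * ev i m)
  = b * (b * S j j + c * S j i) + c * (b * S i j + c * S i i).
Proof.
transitivity (\sum_(l < n) (b * ev j l + c * ev i l) *
   (\sum_(m < n) (b * ev j m + c * ev i m) * S l m)).
  by apply: eq_bigr => l _; rewrite mulr_sumr; apply: eq_bigr => m _; ring.
under eq_bigr do rewrite sum_lin.
rewrite sum_lin; ring.
Qed.


Lemma gauss_tail (m v W u : R) : 0 <= v -> v <= W -> 0 < u ->
  (gauss_law m v [set` `[(m + u)%R, +oo[] <= (expR (- u ^+ 2 / (W *+ 2)))%:E)%E.
Proof.
move=> v0 vW u0; rewrite /gauss_law; case: eqP => [_|/eqP vn0].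
  rewrite indicE memNset ?lee_fin ?expR_ge0 //= in_itv /= andbT.
  by rewrite gerDl; apply/negP; rewrite -ltNge.
have vp : 0 < v by rewrite lt_neqAle eq_sym vn0 v0.
set s := Num.sqrt v.
have sn0 : s != 0 by rewrite sqrtr_eq0 -ltNge.
have s2 : s ^+ 2 = v by rewrite sqr_sqrtr.
set e := expR (- u ^+ 2 / (s ^+ 2 *+ 2)).
have mB : measurable ([set` `[(m + u)%R, +oo[] : set R) by exact: measurable_itv.
apply: (@le_trans _ _ (e%:E * normal_prob (m + u) s [set` `[(m + u)%R, +oo[])%E).
  rewrite /normal_prob -ge0_integralZl //; last first.
  - by rewrite lee_fin expR_ge0.
  - by move=> x _; rewrite lee_fin normal_pdf_ge0.
  - by apply/measurable_EFinP; apply: measurable_funTS; exact: measurable_normal_pdf.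
  apply: ge0_le_integral => //.
  - by move=> x _; rewrite lee_fin normal_pdf_ge0.
  - by apply/measurable_EFinP; apply: measurable_funTS; exact: measurable_normal_pdf.
  - apply/measurable_EFinP; apply: measurable_funTS.
    by apply: measurable_funM => //; exact: measurable_normal_pdf.
  move=> x /=; rewrite in_itv /= andbT => hx.
  rewrite lee_fin /normal_pdf (negbTE sn0).
  rewrite mulrCA ler_wpM2l ?normal_peak_ge0 // /e /normal_fun -expRD ler_expR.
  have D0 : 0 < s ^+ 2 *+ 2 by rewrite s2 pmulrn_lgt0.
  have h : 0 <= 2 * u * (x - (m + u)) by rewrite mulr_ge0 ?subr_ge0 // mulr_ge0 // ltW.
  have -> : (x - m) ^+ 2 = u ^+ 2 + (x - (m + u)) ^+ 2 + 2 * u * (x - (m + u)) by ring.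
  move: h; generalize (2 * u * (x - (m + u))) (u ^+ 2) ((x - (m + u)) ^+ 2) => H B C h.
  rewrite -mulrDl ler_pM2r ?invr_gt0 //.
  lra.
rewrite -[X in (_ <= X)%E]mule1 lee_pmul ?lee_fin ?expR_ge0 //.
- rewrite /e ler_expR !mulNr lerN2 ler_pM2l ?exprn_gt0 // lef_pV2 ?posrE ?pmulrn_lgt0 ?s2 ?ler_wMn2r //.
  exact: lt_le_trans vW.
- by apply: probability_le1; exact: mB.
Qed.



Lemma gauss_anti (m v a b : R) : 0 < v -> a <= b ->
  (gauss_law m v [set` `[a, b]] <= ((b - a) / (2 * Num.sqrt v))%:E)%E.
Proof.
move=> vp ab; rewrite /gauss_law gt_eqF //.
set s := Num.sqrt v.
have sp : 0 < s by rewrite sqrtr_gt0.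
have sn0 : s != 0 by rewrite gt_eqF.
have mB : measurable ([set` `[a, b]] : set R) by exact: measurable_itv.
apply: (@le_trans _ _ (\int[lebesgue_measure]_(x in [set` `[a, b]]) (cst (normal_peak s)%:E) x)%E).
  apply: ge0_le_integral => //.
  - by move=> x _; rewrite lee_fin normal_pdf_ge0.
  - by apply/measurable_EFinP; apply: measurable_funTS; exact: measurable_normal_pdf.
  - by move=> x _; rewrite lee_fin normal_pdf_ub.
rewrite integral_cst // [X in (_ * X <= _)%E]lebesgue_measure_itv /=.
have pk : normal_peak s <= (2 * s)^-1.
  rewrite /normal_peak lef_pV2 ?posrE ?sqrtr_gt0 ?mulr_gt0 ?pmulrn_lgt0 ?mulr_gt0 ?exprn_gt0 ?pi_gt0 //.
  have -> : 2 * s = Num.sqrt ((2 * s) ^+ 2) by rewrite sqrtr_sqr ger0_norm // mulr_ge0 // ltW.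
  rewrite ler_sqrt; last by rewrite pmulrn_lge0 // mulr_ge0 ?sqr_ge0 ?pi_ge0.
  have := pi_ge2 R; have := sqr_ge0 s; rewrite -mulr_natr; nra.
case: ifP => _.
  rewrite -EFinD -EFinM lee_fin [X in _ <= X]mulrC.
  by apply: ler_wpM2r => //; rewrite subr_ge0.
by rewrite mule0 lee_fin divr_ge0 ?subr_ge0 // mulr_ge0 // ltW.
Qed.


Lemma other (n : nat) (a b : 'I_n) : (3 <= n)%N -> exists l : 'I_n, l != a /\ l != b.
Proof.
move=> n3.
have hc := cardsC [set a; b]; rewrite card_ord cards2 in hc.
have : (0 < #|~: [set a; b]|)%N.
  move: hc; case: (a != b) => /= hc; lia.
case/card_gt0P => l; rewrite !inE negb_or => /andP[h1 h2].
by exists l.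
Qed.


Lemma core (d : measure_display) (T : measurableType d) (P : probability T R)
  (n : nat) (X : 'I_n -> {RV P >-> R}) (mu : 'I_n -> R) (Sigma : 'M[R]_n)
  (gamma : R) (i J K : 'I_n) :
  is_gaussian_vector X mu Sigma ->
  (forall a b, Sigma a b = Sigma b a) ->
  (forall t : 'I_n -> R, 0 <= \sum_(l < n) \sum_(m < n) t l * Sigma l m * t m) ->
  0 < gamma -> gamma < 1 ->
  (gamma%:E <= P [set w | (X i w < X J w)%R /\ (X K w < X i w)%R])%E ->
  Sigma J J <= 3 -> Sigma K K <= 3 ->
  100 * ln (8 / gamma) / gamma ^+ 2 < Sigma i i ->
  (mu J - mu i) / (1 - Sigma i J / Sigma i i) <=
    (mu K - mu i) / (1 - Sigma i K / Sigma i i) -> False.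
Proof.
move=> hG Ssym Q0 g0 g1 hE hJ3 hK3 hs hr.
set s := Sigma i i in hs hr.
have g2 : 0 < gamma ^+ 2 by rewrite exprn_gt0.
have l8 : 7 / 8 <= ln (8 / gamma).
  have h := @le_ln1Dx R (gamma / 8 - 1).
  have : -1 < gamma / 8 - 1 by lra.
  move/h; rewrite addrC subrK => h'.
  have -> : 8 / gamma = (gamma / 8)^-1 by rewrite invf_div.
  rewrite lnV; last by rewrite posrE divr_gt0.
  lra.
have s12 : 12 < s.
  apply: le_lt_trans hs; rewrite ler_pdivlMr //.
  have : gamma ^+ 2 <= 1 by rewrite expr_le1 // ltW.
  nra.
have s0 : 0 < s by lra.
have sn0 : s != 0 by rewrite gt_eqF.
set cJ := Sigma i J in hr; set cK := Sigma i K in hr.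
set aJ := cJ / s in hr; set aK := cK / s in hr.
have hc (x : 'I_n) : Sigma x x <= 3 -> 2 * Sigma i x <= s /\
    0 <= 1 * (1 * Sigma x x + - (Sigma i x / s) * Sigma x i) + - (Sigma i x / s) * (1 * Sigma i x + - (Sigma i x / s) * s) <= 3.
  move=> hx3.
  have h := Q0 (fun l => s * ev x l + (- Sigma i x) * ev i l).
  rewrite quad_lin (Ssym x i) in h.
  have e : s * (s * Sigma x x + - Sigma i x * Sigma i x) + - Sigma i x * (s * Sigma i x + - Sigma i x * s)
     = s * (s * Sigma x x - Sigma i x ^+ 2) by ring.
  rewrite e pmulr_rge0 // subr_ge0 in h.
  have h3 : Sigma i x ^+ 2 <= 3 * s.
    apply: le_trans h _; rewrite mulrC; apply: ler_wpM2r => //; exact: ltW.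
  split; first by nra.
  have h2 := Q0 (fun l => 1 * ev x l + (- (Sigma i x / s)) * ev i l).
  rewrite quad_lin in h2; apply/andP; split => //.
  rewrite (Ssym x i).
  have -> : 1 * (1 * Sigma x x + - (Sigma i x / s) * Sigma i x) +
      - (Sigma i x / s) * (1 * Sigma i x + - (Sigma i x / s) * s) = Sigma x x - Sigma i x ^+ 2 / s.
    by field.
  apply: le_trans _ hx3; rewrite lerBlDr lerDl; exact: divr_ge0 (sqr_ge0 _) (ltW s0).
have [hcJ1 /andP[VJ0 VJ3]] := hc J hJ3.
have [hcK1 /andP[VK0 VK3]] := hc K hK3.
rewrite -/cJ -/aJ in hcJ1 VJ0 VJ3.
rewrite -/cK -/aK in hcK1 VK0 VK3.
have haJ : aJ <= 1 / 2 by rewrite /aJ ler_pdivrMr //; lra.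
have haK : aK <= 1 / 2 by rewrite /aK ler_pdivrMr //; lra.
set rJ := (mu J - mu i) / (1 - aJ) in hr.
set rK := (mu K - mu i) / (1 - aK) in hr.
have hrJ : (1 - aJ) * rJ = mu J - mu i by rewrite /rJ mulrC divfK //; apply/eqP; lra.
have hrK : (1 - aK) * rK = mu K - mu i by rewrite /rK mulrC divfK //; apply/eqP; lra.
set L := ln (4 / gamma).
have L0 : 0 < L by apply: ln_gt0; rewrite ltr_pdivlMr //; lra.
have L8 : L <= ln (8 / gamma).
  by rewrite /L ler_ln ?posrE ?divr_gt0 // ler_pM2r ?invr_gt0 //; lra.
set t := Num.sqrt (24 * L).
have t0 : 0 < t by rewrite sqrtr_gt0; lra.
have t2 : t ^+ 2 = 24 * L by rewrite sqr_sqrtr //; lra.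
have hexp : expR (- (t / 2) ^+ 2 / (3 *+ 2)) = gamma / 4.
  have -> : - (t / 2) ^+ 2 / (3 *+ 2) = - L.
    by rewrite expr_div_n t2 -mulr_natr; field.
  by rewrite expRN /L lnK ?posrE ?divr_gt0 // invf_div.
have hA : t / Num.sqrt s < gamma / 2.
  rewrite ltr_pdivrMr ?sqrtr_gt0 //.
  rewrite -(ltr_pXn2r (_ : (0 < 2)%N)) ?nnegrE ?mulr_ge0 ?sqrtr_ge0 ?divr_ge0 ?ltW //.
  rewrite exprMn (sqr_sqrtr (ltW s0)) t2 expr_div_n.
  have hs' : 100 * ln (8 / gamma) < s * gamma ^+ 2 by rewrite -ltr_pdivrMr.
  nra.
have mS : forall (x y : 'I_n) (b c : R) (I : interval R),
    measurable [set w | [set` I] (\sum_(l < n) (b * ev x l + c * ev y l) * X l w)].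
  move=> x y b c I.
  have -> : [set w | [set` I] (\sum_(l < n) (b * ev x l + c * ev y l) * X l w)] =
      (fun w => b * X x w + c * X y w) @^-1` [set` I].
    by apply/funext => w /=; rewrite sum_lin.
  rewrite -[_ @^-1` _]setTI.
  have mf : measurable_fun setT (fun w => b * X x w + c * X y w).
    by apply: measurable_funD; apply: measurable_funM => //; exact: measurable_funP.
  exact: mf measurableT _ (measurable_itv I).
have mlt : forall x y : 'I_n, measurable [set w | (X x w < X y w)%R].
  move=> x y.
  have := @measurable_fun_ltr _ _ _ setT (X x) (X y) (measurable_funP _) (measurable_funP _) measurableT [set true] I.
  by rewrite setTI.
have mE : measurable [set w | (X i w < X J w)%R /\ (X K w < X i w)%R].
  exact: measurableI (mlt i J) (mlt K i).
set A := [set w | [set` `[mu i + rJ - t, mu i + rJ + t]]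
   (\sum_(l < n) (1 * ev i l + 0 * ev i l) * X l w)].
set B := [set w | [set` `[(1 * mu J + - aJ * mu i) + t / 2, +oo[]
   (\sum_(l < n) (1 * ev J l + - aJ * ev i l) * X l w)].
set C := [set w | [set` `[((-1) * mu K + aK * mu i) + t / 2, +oo[]
   (\sum_(l < n) ((-1) * ev K l + aK * ev i l) * X l w)].
have incl : [set w | (X i w < X J w)%R /\ (X K w < X i w)%R] `<=` A `|` B `|` C.
  move=> w [h1 h2]; rewrite /A /B /C /= !sum_lin !in_itv /= ?andbT.
  case: (ltP (X i w) (mu i + rJ - t)) => hlo.
    right.
    have p1 : 0 <= (1 - aK) * (mu i + rJ - t - X i w) by apply: mulr_ge0; lra.
    have p2 : 0 <= (1 - aK) * (rK - rJ) by apply: mulr_ge0; lra.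
    have p3 : 0 <= t * (1 / 2 - aK) by apply: mulr_ge0; lra.
    nra.
  case: (ltP (mu i + rJ + t) (X i w)) => hhi.
    left; right.
    have p1 : 0 <= (1 - aJ) * (X i w - (mu i + rJ + t)) by apply: mulr_ge0; lra.
    have p3 : 0 <= t * (1 / 2 - aJ) by apply: mulr_ge0; lra.
    nra.
  by left; left; rewrite mul1r mul0r addr0 hlo hhi.
have mA : measurable A by exact: mS.
have mB : measurable B by exact: mS.
have mC : measurable C by exact: mS.
have hU : (P (A `|` B `|` C) <= P A + P B + P C)%E.
  have mAB : measurable (A `|` B) by exact: measurableU.
  have h1 := measureU2 P mAB mC.
  apply: le_trans h1 _.
  by apply: leeD2r; apply: measureU2.
have PA : (P A <= (t / Num.sqrt s)%:E)%E.
  rewrite /A hG; last exact: measurable_itv.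
  rewrite sum_lin quad_lin.
  have -> : 1 * (1 * Sigma i i + 0 * Sigma i i) + 0 * (1 * Sigma i i + 0 * Sigma i i) = s.
    by rewrite /s; ring.
  have hab : mu i + rJ - t <= mu i + rJ + t by lra.
  have h1 := @gauss_anti (1 * mu i + 0 * mu i) s _ _ s0 hab.
  apply: le_trans h1 _.
  rewrite lee_fin le_eqVlt; apply/orP; left; apply/eqP; field.
  by rewrite gt_eqF // sqrtr_gt0.
have PB : (P B <= (gamma / 4)%:E)%E.
  rewrite /B hG; last exact: measurable_itv.
  rewrite sum_lin quad_lin.
  have t20 : 0 < t / 2 by lra.
  have h1 := @gauss_tail (1 * mu J + - aJ * mu i) _ 3 (t / 2) VJ0 VJ3 t20.
  apply: le_trans h1 _.
  by rewrite hexp.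
have PC : (P C <= (gamma / 4)%:E)%E.
  rewrite /C hG; last exact: measurable_itv.
  rewrite sum_lin quad_lin.
  have -> : (-1) * ((-1) * Sigma K K + aK * Sigma K i) + aK * ((-1) * Sigma i K + aK * Sigma i i)
    = 1 * (1 * Sigma K K + - aK * Sigma K i) + - aK * (1 * cK + - aK * s) by rewrite /cK /s; ring.
  have t20 : 0 < t / 2 by lra.
  have h1 := @gauss_tail ((-1) * mu K + aK * mu i) _ 3 (t / 2) VK0 VK3 t20.
  apply: le_trans h1 _.
  by rewrite hexp.
have mU : measurable (A `|` B `|` C) by apply: measurableU => //; exact: measurableU.
have := le_trans hE (le_trans (le_measure P (mem_set mE) (mem_set mU) incl)
   (le_trans hU (leeD (leeD PA PB) PC))).
rewrite -!EFinD lee_fin.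
move: hA; generalize (t / Num.sqrt s) => z; lra.
Qed.

End H.
Arguments ev {R n}.

Unset Implicit Arguments.

Theorem lemma10 (R : realType) (d : measure_display) (T : measurableType d)
  (P : probability T R) (n : nat) (X : 'I_n -> {RV P >-> R})
  (mu : 'I_n -> R) (Sigma : 'M[R]_n) (gamma : R) :
  (3 <= n)%N ->
  Sigma^T = Sigma ->
  (forall v : 'cV[R]_n, 0 <= (v^T *m Sigma *m v) 0 0) ->
  is_gaussian_vector X mu Sigma ->
  \sum_(i < n) mu i = 0 ->
  (forall i : 'I_n, \sum_(j < n) Sigma i j = 0) ->
  \tr Sigma = n%:R ->
  \rank Sigma = n.-1 ->
  0 < gamma < 1 ->
  (forall i j k : 'I_n, i != j -> j != k -> i != k ->
     (gamma%:E <= P [set w | (X j w < X i w)%R /\ (X k w < X j w)%R])%E) ->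
  forall i : 'I_n, Sigma i i <= 100 * ln (8 / gamma) / gamma ^+ 2.
Proof.
move=> n3 hsym hpsd hG hmu hrow htr hrank /andP[g0 g1] hobs i.
rewrite leNgt; apply/negP => hs.
have Ssym : forall a b, Sigma a b = Sigma b a.
  by move=> a b; rewrite -[in LHS]hsym mxE.
have Q0 : forall t : 'I_n -> R, 0 <= \sum_(l < n) \sum_(m < n) t l * Sigma l m * t m.
  move=> t; have := hpsd (\col_l t l).
  rewrite mxE.
  have -> : \sum_(m < n) (((\col_l t l)^T *m Sigma) 0 m * (\col_l t l) m 0) =
      \sum_(l < n) \sum_(m < n) t l * Sigma l m * t m.
    rewrite exchange_big; apply: eq_bigr => m _; rewrite !mxE mulr_suml.
    by apply: eq_bigr => l _; rewrite !mxE.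
  done.
have hdiag : forall l, 0 <= Sigma l l.
  move=> l; have := Q0 (fun m => 1 * ev l m + 0 * ev l m).
  by rewrite quad_lin !mul1r !mul0r !addr0.
have [l0 [hl0 _]] := other i i n3.
have [j [hj hjmin]] := @exists_min R n (fun l => l != i) (fun l => Sigma l l) l0 hl0.
have [l1 [hl1 hl1']] := other i j n3.
have [k [hk hkmin]] := @exists_min R n (fun l => (l != i) && (l != j)) (fun l => Sigma l l) l1
   (introT andP (conj hl1 hl1')).
move: hk => /andP[hki hkj].
have hkk0 := hdiag k.
have hsum : n%:R * Sigma k k <= n%:R + Sigma k k + Sigma k k.
  have e1 : \sum_(l < n) Sigma k k = n%:R * Sigma k k by rewrite sumr_const card_ord mulr_natl.
  have e2 : \sum_(l < n) (Sigma l l + (ev i l + ev j l) * Sigma k k) = n%:R + Sigma k k + Sigma k k.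
    rewrite big_split /= -htr /mxtrace.
    rewrite [X in _ + X = _](eq_bigr (fun l => ev i l * Sigma k k + ev j l * Sigma k k)); last first.
      by move=> l _; rewrite mulrDl.
    by rewrite big_split /= (@sum_ev R n i (fun _ => Sigma k k)) (@sum_ev R n j (fun _ => Sigma k k)) addrA.
  rewrite -e1 -e2; apply: ler_sum => l _.
  rewrite /ev.
  case: (eqVneq l i) => [->|li].
    have := hdiag i; case: (i == j) => /= h; lra.
  case: (eqVneq l j) => [->|lj].
    have := hdiag j; rewrite /=; lra.
  rewrite /= add0r mul0r addr0; apply: hkmin; by rewrite li lj.
have N3 : (3 : R) <= n%:R by rewrite ler_nat.
have hK3 : Sigma k k <= 3 by nra.
have hJ3 : Sigma j j <= 3 by apply: le_trans (hjmin k hki) hK3.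
have hs' : 100 * ln (8 / gamma) / gamma ^+ 2 < Sigma i i by [].
case: (leP ((mu j - mu i) / (1 - Sigma i j / Sigma i i)) ((mu k - mu i) / (1 - Sigma i k / Sigma i i))) => hr.
  apply: (@core R d T P n X mu Sigma gamma i j k hG Ssym Q0 g0 g1 _ hJ3 hK3 hs' hr).
  by apply: hobs => //; rewrite eq_sym.
apply: (@core R d T P n X mu Sigma gamma i k j hG Ssym Q0 g0 g1 _ hK3 hJ3 hs' (ltW hr)).
by apply: hobs => //; rewrite eq_sym.
Qed.
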